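(* Let $0<s<r<1$ and let $P$ be a compact packing of the plane by discs of radii $1,r,s$. If some $s$-disc of $P$ has a corona whose coding $w$ is one of 1rss, 11rss, 1rrss, 1srss, then $P$ contains an $s$-disc whose corona coding is neither $w$ nor ssssss.
   Context: A packing is a set of discs in the plane with pairwise disjoint interiors; it is compact if its contact graph (centers as vertices, edges between tangent discs) is a triangulation of the plane. An $x$-disc is a disc of radius $x$. The corona of a disc $D$ is the set of discs tangent to $D$; its coding is the cyclic word over $\{1,r,s\}$ listing the radii of these discs in angular order around $D$ (consecutive letters correspond to tangent discs), considered up to rotation and reversal. *)

(* Defs.v *)
From Stdlib Require Import Reals List.
Import ListNotations.
Open Scope R_scope.

Record Disc := mkDisc { cx : R; cy : R; rad : R }.

Definition dist2 (D E : Disc) : R :=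
  (cx D - cx E) ^ 2 + (cy D - cy E) ^ 2.

Definition tangent (D E : Disc) : Prop :=
  D <> E /\ dist2 D E = (rad D + rad E) ^ 2.

Definition packing (P : Disc -> Prop) : Prop :=
  (forall D, P D -> 0 < rad D) /\
  (forall D E, P D -> P E -> D <> E -> (rad D + rad E) ^ 2 <= dist2 D E).

Definition cross (D U V : Disc) : R :=
  (cx U - cx D) * (cy V - cy D) - (cy U - cy D) * (cx V - cx D).

(** Seen from the center of D, the direction of W lies strictly inside the
    counterclockwise angular sector going from the direction of U to that of V. *)
Definition strictly_between_ccw (D U W V : Disc) : Prop :=
  if Rlt_dec 0 (cross D U V)
  then 0 < cross D U W /\ 0 < cross D W V
  else 0 < cross D U W \/ 0 < cross D W V.

Definition default_disc : Disc := mkDisc 0 0 0.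

Definition cyc_pair (L : list Disc) (i : nat) : Disc * Disc :=
  (nth i L default_disc, nth (S i mod length L)%nat L default_disc).

(** L lists the corona of D in P (the discs of P tangent to D), without
    repetition, in counterclockwise angular order around D. *)
Definition ccw_corona (P : Disc -> Prop) (D : Disc) (L : list Disc) : Prop :=
  NoDup L /\
  (forall X, In X L <-> (P X /\ tangent D X)) /\
  (forall i X, (i < length L)%nat -> In X L ->
     ~ strictly_between_ccw D (fst (cyc_pair L i)) X (snd (cyc_pair L i))).

(** Compactness: the contact graph is a triangulation of the plane, expressed
    vertex-wise: around every disc D, any two angularly consecutive discs of
    the corona are tangent to each other and form with D a triangle whose
    angle at D is the (convex, < pi) sector between them; i.e. the faces
    incident to every vertex are all triangles and surround it. *)
Definition compact_packing (P : Disc -> Prop) : Prop :=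
  forall D, P D ->
    exists L, ccw_corona P D L /\
      forall i, (i < length L)%nat ->
        tangent (fst (cyc_pair L i)) (snd (cyc_pair L i)) /\
        0 < cross D (fst (cyc_pair L i)) (snd (cyc_pair L i)).

Inductive Letter := L1 | Lr | Ls.

Definition lval (r s : R) (l : Letter) : R :=
  match l with L1 => 1 | Lr => r | Ls => s end.

Definition rotation {A} (u v : list A) : Prop :=
  exists a b, u = a ++ b /\ v = b ++ a.

Definition cyc_equiv {A} (u v : list A) : Prop :=
  rotation u v \/ rotation u (rev v).

Definition has_coding (r s : R) (P : Disc -> Prop) (D : Disc) (w : list Letter)
  : Prop :=
  exists L w', ccw_corona P D L /\
    Forall2 (fun X l => rad X = lval r s l) L w' /\ cyc_equiv w' w.

(* Main.v *)
Require Import Defs.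
From Stdlib Require Import Reals Lra Psatz List Arith Lia Bool Classical.
Import ListNotations.

Definition leqb (a b : Letter) : bool :=
  match a, b with L1, L1 | Lr, Lr | Ls, Ls => true | _, _ => false end.
Lemma leqb_eq a b : leqb a b = true <-> a = b.
Proof. destruct a, b; simpl; split; congruence. Qed.

Definition rotk {A} (k : nat) (v : list A) := skipn k v ++ firstn k v.
Definition cands (w : list Letter) :=
  map (fun k => rotk k w) (seq 0 (S (length w))) ++
  map (fun k => rotk k (rev w)) (seq 0 (S (length w))).

Lemma rotation_rotk {A} (u v : list A) : rotation u v ->
  exists k, (k <= length v)%nat /\ u = rotk k v.
Proof.
  intros (a & b & -> & ->). exists (length b). split.
  - rewrite length_app; lia.
  - unfold rotk. f_equal.
    + induction b; simpl; auto.
    + induction b; simpl; congruence.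
Qed.

Lemma cyc_cands v w : cyc_equiv v w -> In v (cands w).
Proof.
  unfold cands; intros [H|H]; apply rotation_rotk in H as (k & Hk & ->); apply in_or_app.
  - left. apply in_map_iff. exists k; split; [reflexivity|]. apply in_seq. lia.
  - right. apply in_map_iff. exists k; split; [reflexivity|]. apply in_seq. rewrite length_rev in Hk. lia.
Qed.

Definition nx (n i : nat) := (S i mod n)%nat.
Definition nl (v : list Letter) i := nth i v Ls.

Definition chk1 (v : list Letter) : bool :=
  let n := length v in
  existsb (fun i => (leqb (nl v i) Lr && leqb (nl v (nx n i)) Ls && leqb (nl v (nx n (nx n i))) Ls
     && leqb (nl v (nx n (nx n (nx n i)))) L1) ||
     (leqb (nl v i) L1 && leqb (nl v (nx n i)) Ls && leqb (nl v (nx n (nx n i))) Ls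
     && leqb (nl v (nx n (nx n (nx n i)))) Lr)) (seq 0 n).

Definition chk2 (lx ly : Letter) (v : list Letter) : bool :=
  let n := length v in
  forallb (fun j => implb (leqb (nl v (nx n j)) Ls && leqb (nl v (nx n (nx n j))) Ls
     && leqb (nl v (nx n (nx n (nx n j)))) lx) (leqb (nl v j) ly)) (seq 0 n).

Definition chk3 (lx ly : Letter) (v : list Letter) : bool :=
  let n := length v in
  forallb (fun j => implb (leqb (nl v j) ly && leqb (nl v (nx n j)) Ls
     && leqb (nl v (nx n (nx n j))) Ls) (leqb (nl v (nx n (nx n (nx n j)))) lx)) (seq 0 n).

Definition chkall (v : list Letter) : bool :=
  chk1 v && chk2 Lr L1 v && chk2 L1 Lr v && chk3 Lr L1 v && chk3 L1 Lr v.

Lemma chk_words w : (w = [L1; Lr; Ls; Ls] \/ w = [L1; L1; Lr; Ls; Ls] \/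
   w = [L1; Lr; Lr; Ls; Ls] \/ w = [L1; Ls; Lr; Ls; Ls]) ->
   forallb chkall (cands w) = true.
Proof. intros [ -> | [ -> | [ -> | -> ] ] ]; vm_compute; reflexivity. Qed.

Open Scope R_scope.

Lemma cone_core (y1 y2 w1 w2 z1 z2 Ly Lw : R) :
  Ly > 0 -> Lw > 0 -> Ly^2 = y1^2+y2^2 -> Lw^2 = w1^2+w2^2 ->
  (Lw*Ly*(y1*w2-y2*w1)) * (Ly*(w1*z2-w2*z1) + Lw*(y1*z2-y2*z1)) > 0 ->
  (w1*z1+w2*z2)*Ly > (y1*z1+y2*z2)*Lw.
Proof.
  intros HLy HLw Ey Ew H.
  set (s1 := Ly*w1 + Lw*y1). set (s2 := Ly*w2+Lw*y2).
  set (d1 := Ly*w1 - Lw*y1). set (d2 := Ly*w2-Lw*y2).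
  assert (Hds : d1*s1+d2*s2 = 0).
  { unfold d1,s1,d2,s2.
    transitivity (Ly^2*(w1^2+w2^2) - Lw^2*(y1^2+y2^2)); [ring|].
    rewrite <- Ey, <- Ew. ring. }
  assert (Hid : (s1^2+s2^2)*(d1*z1+d2*z2) =
     (d1*s1+d2*s2)*(s1*z1+s2*z2) + (s1*d2-s2*d1)*(s1*z2-s2*z1)) by ring.
  assert (Hc : (s1*d2-s2*d1)*(s1*z2-s2*z1) =
     2*((Lw*Ly*(y1*w2-y2*w1)) * (Ly*(w1*z2-w2*z1) + Lw*(y1*z2-y2*z1)))).
  { unfold s1,s2,d1,d2. ring. }
  rewrite Hds, Hc in Hid.
  assert (Hpos : (s1^2+s2^2)*(d1*z1+d2*z2) > 0) by lra.
  assert (d1*z1+d2*z2 > 0).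
  { destruct (Rle_or_lt (d1*z1+d2*z2) 0) as [h|h]; [|exact h].
    assert (0 <= s1^2+s2^2) by nra. nra. }
  unfold d1,d2 in H0. nra.
Qed.

Definition dot (D U V : Disc) : R :=
  (cx U - cx D)*(cx V - cx D) + (cy U - cy D)*(cy V - cy D).

Lemma cone1 D Y W Z Ly Lw : Ly > 0 -> Lw > 0 -> Ly^2 = dot D Y Y -> Lw^2 = dot D W W ->
  cross D Y W > 0 -> cross D W Z > 0 -> cross D Y Z > 0 ->
  dot D W Z * Ly > dot D Y Z * Lw.
Proof.
  unfold dot, cross; intros. apply cone_core; try (rewrite H1 || rewrite H2); try ring; auto.
  apply Rmult_lt_0_compat; [apply Rmult_lt_0_compat; [nra|lra] | nra].
Qed.

Lemma cone2 D Y W Z Ly Lw : Ly > 0 -> Lw > 0 -> Ly^2 = dot D Y Y -> Lw^2 = dot D W W ->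
  cross D Z W > 0 -> cross D W Y > 0 -> cross D Z Y > 0 ->
  dot D W Z * Ly > dot D Y Z * Lw.
Proof.
  unfold dot, cross; intros. apply cone_core; try (rewrite H1 || rewrite H2); try ring; auto.
  set (a := (cx Y - cx D) * (cy W - cy D) - (cy Y - cy D) * (cx W - cx D)).
  set (b := Ly * ((cx W - cx D) * (cy Z - cy D) - (cy W - cy D) * (cx Z - cx D)) +
   Lw * ((cx Y - cx D) * (cy Z - cy D) - (cy Y - cy D) * (cx Z - cx D))).
  assert (a < 0) by (unfold a; lra).
  assert (b < 0) by (unfold b; nra).
  assert (Lw*Ly*a < 0) by (assert (Lw*Ly>0) by nra; nra). nra.
Qed.

Lemma parallel D A B Z La Lb : La > 0 -> Lb > 0 -> La^2 = dot D A A -> Lb^2 = dot D B B ->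
  cross D A B = 0 -> cross D A Z * cross D B Z > 0 ->
  dot D B Z * La = dot D A Z * Lb.
Proof.
  unfold dot, cross; intros HLa HLb Ea Eb Hab Hz.
  set (a1 := cx A - cx D) in *. set (a2 := cy A - cy D) in *.
  set (b1 := cx B - cx D) in *. set (b2 := cy B - cy D) in *.
  set (z1 := cx Z - cx D) in *. set (z2 := cy Z - cy D) in *.
  assert (I1 : (a1*a1+a2*a2)*(b1*z2-b2*z1) = (a1*b1+a2*b2)*(a1*z2-a2*z1) - (a1*b2-a2*b1)*(a1*z1+a2*z2)) by ring.
  rewrite Hab in I1.
  assert (Hab' : a1*b1+a2*b2 > 0).
  { assert (I2 : (a1*a1+a2*a2)*((b1*z2-b2*z1)*(a1*z2-a2*z1)) = (a1*b1+a2*b2)*(a1*z2-a2*z1)^2).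
    { transitivity (((a1*a1+a2*a2)*(b1*z2-b2*z1))*(a1*z2-a2*z1)); [ring|]. rewrite I1. ring. }
    assert (a1*a1+a2*a2 > 0) by (rewrite <- Ea; nra).
    assert (Hl : (a1*a1+a2*a2)*((b1*z2-b2*z1)*(a1*z2-a2*z1)) > 0).
    { apply Rmult_lt_0_compat; [lra|]. rewrite Rmult_comm. exact Hz. }
    rewrite I2 in Hl.
    destruct (Rle_or_lt (a1*b1+a2*b2) 0) as [h|h]; [|exact h].
    assert (0 <= (a1*z2-a2*z1)^2) by apply pow2_ge_0. nra. }
  assert (I3 : (a1*b1+a2*b2)^2 + (a1*b2-a2*b1)^2 = (a1*a1+a2*a2)*(b1*b1+b2*b2)) by ring.
  rewrite Hab in I3.
  assert (Hd : a1*b1+a2*b2 = La*Lb).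
  { assert ((a1*b1+a2*b2)^2 = (La*Lb)^2) by (rewrite <- Ea, <- Eb in I3; nra).
    assert (La*Lb>0) by nra. nra. }
  assert (I4 : (a1*a1+a2*a2)*(b1*z1+b2*z2) = (a1*b1+a2*b2)*(a1*z1+a2*z2) + (a1*b2-a2*b1)*(a1*z2-a2*z1)) by ring.
  rewrite Hab, Hd, <- Ea in I4.
  apply Rmult_eq_reg_l with La; [|lra]. nra.
Qed.

Lemma dist2_dot D U V : dist2 U V = dot D U U + dot D V V - 2 * dot D U V.
Proof. unfold dist2, dot; ring. Qed.

Lemma tan_dot D U : tangent D U -> dot D U U = (rad D + rad U)^2.
Proof. intros [_ H]. rewrite <- H. unfold dist2, dot; ring. Qed.

Lemma tangent_sym U V : tangent U V -> tangent V U.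
Proof. intros [H1 H2]; split; [congruence|]. unfold dist2 in *. replace ((rad V + rad U)^2) with ((rad U + rad V)^2) by ring. rewrite <- H2. ring. Qed.

Lemma par_dot D U A B La Lb : La > 0 -> Lb > 0 -> La^2 = dot D A A -> Lb^2 = dot D B B ->
  cross D A B = 0 -> cross D U A * cross D U B > 0 -> dot D A B = La*Lb.
Proof.
  unfold dot, cross; intros HLa HLb Ea Eb Hab Hz.
  set (a1 := cx A - cx D) in *. set (a2 := cy A - cy D) in *.
  set (b1 := cx B - cx D) in *. set (b2 := cy B - cy D) in *.
  set (z1 := cx U - cx D) in *. set (z2 := cy U - cy D) in *.
  assert (I1 : (a1*a1+a2*a2)*(z1*b2-z2*b1) = (z1*a2-z2*a1)*(a1*b1+a2*b2) + (z1*a1+z2*a2)*(a1*b2-a2*b1)) by ring.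
  rewrite Hab in I1.
  assert (Hab' : a1*b1+a2*b2 > 0).
  { assert (I2 : (a1*a1+a2*a2)*((z1*b2-z2*b1)*(z1*a2-z2*a1)) = (a1*b1+a2*b2)*(z1*a2-z2*a1)^2).
    { transitivity (((a1*a1+a2*a2)*(z1*b2-z2*b1))*(z1*a2-z2*a1)); [ring|]. rewrite I1. ring. }
    assert (a1*a1+a2*a2 > 0) by (rewrite <- Ea; nra).
    assert (Hl : (a1*a1+a2*a2)*((z1*b2-z2*b1)*(z1*a2-z2*a1)) > 0).
    { apply Rmult_lt_0_compat; [lra|]. rewrite Rmult_comm. exact Hz. }
    rewrite I2 in Hl.
    destruct (Rle_or_lt (a1*b1+a2*b2) 0) as [h|h]; [|exact h].
    assert (0 <= (z1*a2-z2*a1)^2) by apply pow2_ge_0. nra. }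
  assert (I3 : (a1*b1+a2*b2)^2 + (a1*b2-a2*b1)^2 = (a1*a1+a2*a2)*(b1*b1+b2*b2)) by ring.
  rewrite Hab in I3.
  assert ((a1*b1+a2*b2)^2 = (La*Lb)^2) by (rewrite <- Ea, <- Eb in I3; nra).
  assert (La*Lb>0) by nra. nra.
Qed.

Lemma succ_geo (P : Disc -> Prop) C A B E : 0 < rad C -> packing P -> P B -> P E -> tangent C B -> tangent C E ->
  cross C A B > 0 -> cross C A E > 0 -> ~ (cross C B E > 0) -> ~ (cross C E B > 0) -> B = E.
Proof.
  intros Hr [Hpos Hpk] HB HE TB TE H1 H2 H3 H4.
  assert (Hc : cross C B E = 0).
  { assert (cross C E B = - cross C B E) by (unfold cross; ring). lra. }
  apply NNPP; intro Hne.
  pose proof (Hpk B E HB HE Hne) as Hd.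
  pose proof (Hpos B HB). pose proof (Hpos E HE).
  pose proof (tan_dot C B TB). pose proof (tan_dot C E TE).
  assert (dot C B E = (rad C + rad B)*(rad C + rad E)).
  { apply (par_dot C A); try lra; try nra. }
  rewrite (dist2_dot C) in Hd. nra.
Qed.

Lemma nocusp C Y Z W : 0 < rad C -> rad Y = rad C -> 0 < rad Z -> rad C <= rad W ->
  tangent C Y -> tangent C Z -> tangent Y Z -> tangent C W ->
  (rad W + rad Z)^2 <= dist2 W Z ->
  ~ (cross C Y W > 0 /\ cross C W Z > 0 /\ cross C Y Z > 0) /\
  ~ (cross C Z W > 0 /\ cross C W Y > 0 /\ cross C Z Y > 0).
Proof.
  intros Hc HY HZ HW TY TZ TYZ TW Hd.
  pose proof (tan_dot C Y TY) as EY. pose proof (tan_dot C Z TZ) as EZ.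
  pose proof (tan_dot C W TW) as EW.
  destruct TYZ as [_ DYZ]. rewrite (dist2_dot C) in DYZ, Hd.
  assert (HYZ : dot C Y Z = 2 * rad C ^ 2) by (rewrite HY in *; nra).
  assert (HWZ : 2 * dot C W Z <= (rad C + rad W)^2 + (rad C + rad Z)^2 - (rad W + rad Z)^2) by lra.
  assert (Ly : rad C + rad Y > 0) by lra. assert (Lw : rad C + rad W > 0) by lra.
  split; intros (h1 & h2 & h3).
  - pose proof (cone1 C Y W Z (rad C + rad Y) (rad C + rad W) Ly Lw (eq_sym EY) (eq_sym EW) h1 h2 h3) as K.
    rewrite HYZ, HY in K. clear -K HWZ Hc HZ HW.
    assert (rad C * (2 * dot C W Z) <= rad C * ((rad C + rad W)^2 + (rad C + rad Z)^2 - (rad W + rad Z)^2)) by (apply Rmult_le_compat_l; lra).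
    assert (rad C * rad Z * (rad W - rad C) >= 0) by (apply Rle_ge; apply Rmult_le_pos; nra).
    nra.
  - pose proof (cone2 C Y W Z (rad C + rad Y) (rad C + rad W) Ly Lw (eq_sym EY) (eq_sym EW) h1 h2 h3) as K.
    rewrite HYZ, HY in K. clear -K HWZ Hc HZ HW.
    assert (rad C * (2 * dot C W Z) <= rad C * ((rad C + rad W)^2 + (rad C + rad Z)^2 - (rad W + rad Z)^2)) by (apply Rmult_le_compat_l; lra).
    assert (rad C * rad Z * (rad W - rad C) >= 0) by (apply Rle_ge; apply Rmult_le_pos; nra).
    nra.
Qed.

Lemma mono_key C Z A B : 0 < rad C -> 0 < rad Z -> 0 < rad A -> 0 < rad B ->
  tangent C Z -> tangent C A -> tangent C B -> tangent A Z -> tangent B Z ->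
  rad B < rad A -> dot C B Z * (rad C + rad A) > dot C A Z * (rad C + rad B).
Proof.
  intros hc hz ha hb TZ TA TB TAZ TBZ Hlt.
  pose proof (tan_dot C Z TZ). pose proof (tan_dot C A TA). pose proof (tan_dot C B TB).
  destruct TAZ as [_ DA]. destruct TBZ as [_ DB].
  rewrite (dist2_dot C) in DA, DB.
  assert (E1 : dot C A Z = ((rad C + rad A)^2 + (rad C + rad Z)^2 - (rad A + rad Z)^2)/2) by lra.
  assert (E2 : dot C B Z = ((rad C + rad B)^2 + (rad C + rad Z)^2 - (rad B + rad Z)^2)/2) by lra.
  rewrite E1, E2. clear -hc hz Hlt.
  assert (rad C * rad Z * (rad A - rad B) > 0) by (apply Rmult_lt_0_compat; [apply Rmult_lt_0_compat|]; lra).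
  match goal with |- ?l > ?r => assert (l - r = 2 * (rad C * rad Z * (rad A - rad B))) by field end.
  lra.
Qed.

Lemma G2 C Z A B : 0 < rad C -> 0 < rad Z -> 0 < rad A -> 0 < rad B ->
  tangent C Z -> tangent C A -> tangent C B -> tangent A Z -> tangent B Z ->
  cross C A Z > 0 -> cross C B Z > 0 -> rad B < rad A -> cross C A B > 0.
Proof.
  intros hc hz ha hb TZ TA TB TAZ TBZ h1 h2 Hlt.
  pose proof (mono_key C Z A B hc hz ha hb TZ TA TB TAZ TBZ Hlt) as K.
  pose proof (tan_dot C A TA). pose proof (tan_dot C B TB).
  destruct (Rtotal_order (cross C A B) 0) as [h|[h|h]]; [|exfalso|exact h].
  - exfalso. assert (h' : cross C B A > 0) by (unfold cross in *; lra).
    pose proof (cone1 C B A Z (rad C + rad B) (rad C + rad A) ltac:(lra) ltac:(lra)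
      (eq_sym H0) (eq_sym H) h' h1 h2). lra.
  - pose proof (parallel C A B Z (rad C + rad A) (rad C + rad B) ltac:(lra) ltac:(lra)
      (eq_sym H) (eq_sym H0) h ltac:(nra)). lra.
Qed.

Lemma G2' C Z A B : 0 < rad C -> 0 < rad Z -> 0 < rad A -> 0 < rad B ->
  tangent C Z -> tangent C A -> tangent C B -> tangent A Z -> tangent B Z ->
  cross C Z A > 0 -> cross C Z B > 0 -> rad A < rad B -> cross C A B > 0.
Proof.
  intros hc hz ha hb TZ TA TB TAZ TBZ h1 h2 Hlt.
  pose proof (mono_key C Z B A hc hz hb ha TZ TB TA TBZ TAZ Hlt) as K.
  pose proof (tan_dot C A TA). pose proof (tan_dot C B TB).
  destruct (Rtotal_order (cross C A B) 0) as [h|[h|h]]; [|exfalso|exact h].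
  - exfalso. assert (h' : cross C B A > 0) by (unfold cross in *; lra).
    pose proof (cone2 C A B Z (rad C + rad A) (rad C + rad B) ltac:(lra) ltac:(lra)
      (eq_sym H) (eq_sym H0) h2 h' h1). lra.
  - assert (cross C A Z * cross C B Z > 0).
    { assert (cross C A Z = - cross C Z A) by (unfold cross; ring).
      assert (cross C B Z = - cross C Z B) by (unfold cross; ring). nra. }
    pose proof (parallel C A B Z (rad C + rad A) (rad C + rad B) ltac:(lra) ltac:(lra)
      (eq_sym H) (eq_sym H0) h H1). lra.
Qed.

Lemma corona_mem P C L X : ccw_corona P C L -> (In X L <-> P X /\ tangent C X).
Proof. intros (_ & H & _). apply H. Qed.

Lemma mem1 P C L X : ccw_corona P C L -> In X L -> P X /\ tangent C X.
Proof. intros H; apply (corona_mem P C L X H). Qed.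
Lemma mem2 P C L X : ccw_corona P C L -> P X -> tangent C X -> In X L.
Proof. intros H h1 h2; apply (corona_mem P C L X H); auto. Qed.
Lemma mem12 P C L L' X : ccw_corona P C L -> ccw_corona P C L' -> In X L -> In X L'.
Proof. intros H H' h; destruct (mem1 P C L X H h); apply (mem2 P C L'); auto. Qed.

Lemma nx_lt n i : (0 < n)%nat -> (nx n i < n)%nat.
Proof. intros; unfold nx; apply Nat.mod_upper_bound; lia. Qed.

Lemma ring_cond P C L i X : ccw_corona P C L -> (i < length L)%nat -> In X L ->
  ~ strictly_between_ccw C (nth i L default_disc) X (nth (nx (length L) i) L default_disc).
Proof. intros (_ & _ & H) Hi HX. exact (H i X Hi HX). Qed.

Lemma sb_pos C U X V : cross C U V > 0 -> ~ strictly_between_ccw C U X V ->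
  ~ (cross C U X > 0 /\ cross C X V > 0).
Proof. unfold strictly_between_ccw; intros h H; destruct (Rlt_dec 0 (cross C U V)); [exact H|lra]. Qed.

Lemma sb_nonpos C U X V : ~ (cross C U V > 0) -> ~ strictly_between_ccw C U X V ->
  ~ (cross C U X > 0).
Proof. unfold strictly_between_ccw; intros h H; destruct (Rlt_dec 0 (cross C U V)); [lra|tauto]. Qed.

Lemma len_pos {A} (L : list A) i : (i < length L)%nat -> (0 < length L)%nat.
Proof. lia. Qed.

Lemma ring_next P C L i : packing P -> compact_packing P -> P C -> ccw_corona P C L ->
  (i < length L)%nat ->
  tangent (nth i L default_disc) (nth (nx (length L) i) L default_disc) /\
  cross C (nth i L default_disc) (nth (nx (length L) i) L default_disc) > 0.
Proof.
  intros Hpk Hcomp HC HL Hi.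
  destruct (Hcomp C HC) as (Lc & HLc & Htan).
  set (U := nth i L default_disc). set (V := nth (nx (length L) i) L default_disc).
  assert (HU : In U L) by (apply nth_In; auto).
  assert (HUc : In U Lc) by (apply (mem12 P C L Lc); auto).
  destruct (In_nth Lc U default_disc HUc) as (j & Hj & HjU).
  destruct (Htan j Hj) as [T1 T2]. unfold cyc_pair in T1, T2; simpl in T1, T2.
  rewrite HjU in T1, T2.
  set (V' := nth (S j mod length Lc) Lc default_disc) in *.
  assert (HV : In V L) by (apply nth_In; apply nx_lt; lia).
  assert (HVc : In V Lc) by (apply (mem12 P C L Lc); auto).
  assert (HV'c : In V' Lc) by (apply nth_In; apply Nat.mod_upper_bound; lia).
  assert (HV' : In V' L) by (apply (mem12 P C Lc L); auto).
  pose proof (ring_cond P C L i V' HL Hi HV') as R1. fold U V in R1.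
  pose proof (ring_cond P C Lc j V HLc Hj HVc) as R2. rewrite HjU in R2.
  assert (HUV : cross C U V > 0).
  { apply NNPP; intro h. exact (sb_nonpos C U V' V h R1 T2). }
  apply (sb_pos _ _ _ _ HUV) in R1. apply (sb_pos _ _ _ _ T2) in R2.
  pose proof (proj1 Hpk C HC) as HrC.
  apply (mem1 P C L) in HV; auto. apply (mem1 P C L) in HV'; auto.
  assert (HeQ : V = V').
  { apply (succ_geo P C U V V'); tauto. }
  rewrite HeQ. split; assumption.
Qed.

Lemma ring_succ P C L i B : packing P -> compact_packing P -> P C -> ccw_corona P C L ->
  (i < length L)%nat -> P B -> tangent C B -> cross C (nth i L default_disc) B > 0 ->
  (nth (nx (length L) i) L default_disc <> B ->
   ~ (cross C (nth i L default_disc) (nth (nx (length L) i) L default_disc) > 0 /\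
      cross C (nth (nx (length L) i) L default_disc) B > 0)) ->
  nth (nx (length L) i) L default_disc = B.
Proof.
  intros Hpk Hcomp HC HL Hi HB TB HAB Hyp.
  destruct (classic (nth (nx (length L) i) L default_disc = B)) as [e|ne]; [exact e|exfalso].
  specialize (Hyp ne).
  destruct (ring_next P C L i Hpk Hcomp HC HL Hi) as [_ HAE].
  set (A := nth i L default_disc) in *. set (E := nth (nx (length L) i) L default_disc) in *.
  assert (HBL : In B L) by (apply (mem2 P C L); auto).
  pose proof (ring_cond P C L i B HL Hi HBL) as R. fold A E in R.
  apply (sb_pos _ _ _ _ HAE) in R.
  assert (HE : In E L) by (apply nth_In; apply nx_lt; lia).
  apply (mem1 P C L) in HE; auto.
  pose proof (proj1 Hpk C HC) as HrC.
  apply ne. symmetry. apply (succ_geo P C A B E); tauto.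
Qed.

Lemma Forall2_nth' {A B} (R : A -> B -> Prop) l l' d d' : Forall2 R l l' ->
  forall i, (i < length l)%nat -> R (nth i l d) (nth i l' d').
Proof.
  induction 1; simpl; intros i Hi; [lia|]. destruct i; auto. apply IHForall2; lia.
Qed.

Lemma Forall2_in_l {A B} (R : A -> B -> Prop) l l' x : Forall2 R l l' -> In x l ->
  exists y, In y l' /\ R x y.
Proof.
  induction 1; simpl; [tauto|]. intros [->|h]; [exists y; auto|].
  destruct (IHForall2 h) as (z & ? & ?); exists z; auto.
Qed.

Lemma cross_cyc A B C : cross A B C = cross B C A.
Proof. unfold cross; ring. Qed.

Lemma pv_ex n k : (k < n)%nat -> exists j, (j < n)%nat /\ nx n j = k.
Proof.
  intros Hk. unfold nx. destruct k.
  - exists (n-1)%nat. split; [lia|]. replace (S (n-1)) with n by lia. apply Nat.mod_same; lia.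
  - exists k. split; [lia|]. apply Nat.mod_small; lia.
Qed.

Definition goodpair (lx ly : Letter) := (lx = Lr /\ ly = L1) \/ (lx = L1 /\ ly = Lr).

Lemma dec1 v : chk1 v = true -> exists i lx ly, (i < length v)%nat /\ goodpair lx ly /\
  nl v i = lx /\ nl v (nx (length v) i) = Ls /\ nl v (nx (length v) (nx (length v) i)) = Ls /\
  nl v (nx (length v) (nx (length v) (nx (length v) i))) = ly.
Proof.
  unfold chk1. intros H. apply existsb_exists in H as (i & Hi & H). apply in_seq in Hi.
  apply orb_true_iff in H as [H|H]; repeat (apply andb_true_iff in H as [H ?]);
  repeat match goal with h : leqb _ _ = true |- _ => apply leqb_eq in h end.
  - exists i, Lr, L1; unfold goodpair; repeat split; auto; lia.
  - exists i, L1, Lr; unfold goodpair; repeat split; auto; lia.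
Qed.

Lemma dec2 lx ly v : chk2 lx ly v = true -> forall j, (j < length v)%nat ->
  nl v (nx (length v) j) = Ls -> nl v (nx (length v) (nx (length v) j)) = Ls ->
  nl v (nx (length v) (nx (length v) (nx (length v) j))) = lx -> nl v j = ly.
Proof.
  unfold chk2. intros H j Hj h1 h2 h3. rewrite forallb_forall in H.
  specialize (H j (proj2 (in_seq (length v) 0 j) ltac:(lia))).
  rewrite h1, h2, h3 in H. destruct lx; simpl in H; apply leqb_eq; exact H.
Qed.

Lemma dec3 lx ly v : chk3 lx ly v = true -> forall j, (j < length v)%nat ->
  nl v j = ly -> nl v (nx (length v) j) = Ls -> nl v (nx (length v) (nx (length v) j)) = Ls ->
  nl v (nx (length v) (nx (length v) (nx (length v) j))) = lx.
Proof.
  unfold chk3. intros H j Hj h1 h2 h3. rewrite forallb_forall in H.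
  specialize (H j (proj2 (in_seq (length v) 0 j) ltac:(lia))).
  rewrite h1, h2, h3 in H. destruct ly; simpl in H; apply leqb_eq; exact H.
Qed.

Lemma comb w v : (w = [L1; Lr; Ls; Ls] \/ w = [L1; L1; Lr; Ls; Ls] \/
   w = [L1; Lr; Lr; Ls; Ls] \/ w = [L1; Ls; Lr; Ls; Ls]) -> cyc_equiv v w ->
  chk1 v = true /\ (forall lx ly, goodpair lx ly -> chk2 lx ly v = true /\ chk3 lx ly v = true).
Proof.
  intros Hw Hc. pose proof (chk_words w Hw) as H. rewrite forallb_forall in H.
  specialize (H v (cyc_cands v w Hc)). unfold chkall in H.
  repeat (apply andb_true_iff in H as [H ?]). split; auto.
  intros lx ly [[-> ->]|[-> ->]]; auto.
Qed.

Lemma all_s_cands : forallb (fun v => forallb (fun l => leqb l Ls) v) (cands [Ls;Ls;Ls;Ls;Ls;Ls]) = true.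
Proof. vm_compute; reflexivity. Qed.


Lemma coding_s r s P C X : has_coding r s P C [Ls;Ls;Ls;Ls;Ls;Ls] -> P X -> tangent C X -> rad X = s.
Proof.
  intros (L & v & HL & F & E) HX TX.
  assert (In X L) by (apply (mem2 P C L); auto).
  destruct (Forall2_in_l _ _ _ X F H) as (l & Hl & Hr).
  pose proof all_s_cands as A. rewrite forallb_forall in A.
  specialize (A v (cyc_cands _ _ E)). rewrite forallb_forall in A.
  specialize (A l Hl). apply leqb_eq in A. subst. exact Hr.
Qed.

Lemma cyc_len {A} (v w : list A) : cyc_equiv v w -> length v = length w.
Proof.
  intros [(a & b & -> & ->)|(a & b & -> & E)].
  - rewrite !length_app; lia.
  - rewrite <- (length_rev w), E. rewrite !length_app; lia.
Qed.

Lemma lval_s r s l : s < r -> r < 1 -> lval r s l = s -> l = Ls.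
Proof. destruct l; simpl; intros; auto; lra. Qed.

Lemma lval_inj r s a b : s < r -> r < 1 -> 0 < s -> lval r s a = lval r s b -> a = b.
Proof. destruct a, b; simpl; intros; auto; lra. Qed.

Theorem lemma4 (r s : R) (P : Disc -> Prop) (w : list Letter) :
  0 < s -> s < r -> r < 1 ->
  (forall D : Disc, P D -> rad D = 1 \/ rad D = r \/ rad D = s) ->
  packing P -> compact_packing P ->
  (w = [L1; Lr; Ls; Ls] \/ w = [L1; L1; Lr; Ls; Ls] \/
   w = [L1; Lr; Lr; Ls; Ls] \/ w = [L1; Ls; Lr; Ls; Ls]) ->
  (exists D : Disc, P D /\ rad D = s /\ has_coding r s P D w) ->
  exists D : Disc, P D /\ rad D = s /\ ~ has_coding r s P D w /\
    ~ has_coding r s P D [Ls; Ls; Ls; Ls; Ls; Ls].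
Proof.
  intros Hs Hsr Hr1 Hrad Hpk Hcomp Hw (D0 & HD0 & Hs0 & (L0 & w0 & Hc0 & F0 & E0)).
  pose proof (proj1 Hpk) as Hpos.
  assert (Hge : forall D, P D -> s <= rad D) by (intros D HD; destruct (Hrad D HD) as [h|[h|h]]; lra).
  destruct (comb w w0 Hw E0) as [Hc1 Hc23].
  destruct (dec1 w0 Hc1) as (i & lx & ly & Hi & Hpair & l0 & l1 & l2 & l3).
  destruct (Hc23 lx ly Hpair) as [Hch2 Hch3].
  pose proof (Forall2_length F0) as Hlen0.
  rewrite <- Hlen0 in *.
  set (n0 := length L0) in *.
  assert (Hn0 : (0 < n0)%nat) by lia.
  set (i1 := nx n0 i). set (i2 := nx n0 i1). set (i3 := nx n0 i2).
  assert (Hi1 : (i1 < n0)%nat) by (apply nx_lt; lia).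
  assert (Hi2 : (i2 < n0)%nat) by (apply nx_lt; lia).
  assert (Hi3 : (i3 < n0)%nat) by (apply nx_lt; lia).
  set (X := nth i L0 default_disc). set (P1 := nth i1 L0 default_disc). set (Q := nth i2 L0 default_disc). set (Y := nth i3 L0 default_disc).
  assert (RX : rad X = lval r s lx) by (rewrite <- l0; apply (Forall2_nth' _ _ _ _ _ F0); auto).
  assert (RP1 : rad P1 = s) by (change s with (lval r s Ls); rewrite <- l1; apply (Forall2_nth' _ _ _ _ _ F0); auto).
  assert (RQ : rad Q = s) by (change s with (lval r s Ls); rewrite <- l2; apply (Forall2_nth' _ _ _ _ _ F0); auto).
  assert (RY : rad Y = lval r s ly) by (rewrite <- l3; apply (Forall2_nth' _ _ _ _ _ F0); auto).
  assert (RXs : rad X <> s) by (rewrite RX; destruct Hpair as [[-> _]|[-> _]]; simpl; lra).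
  assert (RYs : rad Y <> s) by (rewrite RY; destruct Hpair as [[_ ->]|[_ ->]]; simpl; lra).
  destruct (mem1 P D0 L0 X Hc0 (nth_In _ _ Hi)) as [PX TX].
  destruct (mem1 P D0 L0 P1 Hc0 (nth_In _ _ Hi1)) as [PP1 TP1].
  destruct (mem1 P D0 L0 Q Hc0 (nth_In _ _ Hi2)) as [PQ TQ].
  destruct (mem1 P D0 L0 Y Hc0 (nth_In _ _ Hi3)) as [PY TY].
  assert (tangent X P1 /\ cross D0 X P1 > 0) as [TXP1 CXP1] by exact (ring_next P D0 L0 i Hpk Hcomp HD0 Hc0 Hi).
  assert (tangent P1 Q /\ cross D0 P1 Q > 0) as [TP1Q CP1Q] by exact (ring_next P D0 L0 i1 Hpk Hcomp HD0 Hc0 Hi1).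
  assert (tangent Q Y /\ cross D0 Q Y > 0) as [TQY CQY] by exact (ring_next P D0 L0 i2 Hpk Hcomp HD0 Hc0 Hi2).
  destruct (classic (has_coding r s P P1 w)) as [HP1|HP1].
  2:{ exists P1; repeat split; auto. intro h.
      apply RXs. apply (coding_s r s P P1 X h PX). apply tangent_sym; auto. }
  destruct (classic (has_coding r s P Q w)) as [HQ|HQ].
  2:{ exists Q; repeat split; auto. intro h.
      apply RYs. apply (coding_s r s P Q Y h PY); auto. }
  exfalso.
  assert (Hsym : forall A B, tangent A B -> tangent B A) by apply tangent_sym.
  assert (Hov : forall A B, P A -> P B -> A <> B -> (rad A + rad B)^2 <= dist2 A B)
    by (intros; apply (proj2 Hpk); auto).
  destruct HP1 as (L1 & w1 & Hc1' & F1 & E1).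
  destruct (comb w w1 Hw E1) as [_ Hc23'].
  destruct (Hc23' lx ly Hpair) as [Hch2' _].
  pose proof (Forall2_length F1) as Hlen1.
  set (n1 := length L1) in *.
  assert (HQL1 : In Q L1) by (apply (mem2 P P1 L1); auto).
  destruct (In_nth L1 Q default_disc HQL1) as (k & Hk & HkQ).
  assert (Hk1 : (nx n1 k < n1)%nat) by (apply nx_lt; lia).
  assert (Hk2 : (nx n1 (nx n1 k) < n1)%nat) by (apply nx_lt; lia).
  assert (S1 : nth (nx n1 k) L1 default_disc = D0).
  { apply (ring_succ P P1 L1 k D0 Hpk Hcomp PP1 Hc1' Hk HD0 (Hsym _ _ TP1)).
    - rewrite HkQ, cross_cyc, cross_cyc. lra.
    - rewrite HkQ. intros hne. set (E := nth (nx n1 k) L1 default_disc) in *.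
      destruct (mem1 P P1 L1 E Hc1' (nth_In _ _ Hk1)) as [PE TE].
      destruct (nocusp P1 Q D0 E (Hpos P1 PP1) ltac:(lra) (Hpos D0 HD0)
        ltac:(rewrite RP1; apply Hge; auto) TP1Q (Hsym _ _ TP1) (Hsym _ _ TQ) TE
        (Hov E D0 PE HD0 hne)) as [N _].
      intros [h1 h2]; apply N; repeat split; auto. rewrite cross_cyc, cross_cyc; lra. }
  assert (S2 : nth (nx n1 (nx n1 k)) L1 default_disc = X).
  { apply (ring_succ P P1 L1 (nx n1 k) X Hpk Hcomp PP1 Hc1' Hk1 PX (Hsym _ _ TXP1)).
    - rewrite S1. pose proof (cross_cyc P1 D0 X); lra.
    - rewrite S1. intros hne. set (E := nth (nx n1 (nx n1 k)) L1 default_disc) in *.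
      destruct (mem1 P P1 L1 E Hc1' (nth_In _ _ Hk2)) as [PE TE].
      destruct (nocusp P1 D0 X E (Hpos P1 PP1) ltac:(lra) (Hpos X PX)
        ltac:(rewrite RP1; apply Hge; auto) (Hsym _ _ TP1) (Hsym _ _ TXP1) TX TE
        (Hov E X PE PX hne)) as [N _].
      intros [h1 h2]; apply N; repeat split; auto. pose proof (cross_cyc P1 D0 X); lra. }
  pose proof (dec2 lx ly w1 Hch2') as D2. rewrite <- Hlen1 in D2. fold n1 in D2.
  assert (LR1 : forall t, (t < n1)%nat -> rad (nth t L1 default_disc) = lval r s (nl w1 t))
    by (intros t ht; apply (Forall2_nth' _ _ _ _ _ F1); auto).
  assert (Lk0 : nl w1 k = Ls) by (apply (lval_s r s); auto; rewrite <- LR1, HkQ; auto).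
  assert (Lk1 : nl w1 (nx n1 k) = Ls) by (apply (lval_s r s); auto; rewrite <- LR1, S1; auto).
  assert (Lk2 : nl w1 (nx n1 (nx n1 k)) = lx) by (apply (lval_inj r s); auto; rewrite <- LR1, S2; auto).
  destruct (pv_ex n1 k Hk) as (j & Hj & Hjk).
  assert (LU : nl w1 j = ly) by (apply D2; auto; rewrite Hjk; auto).
  set (U := nth j L1 default_disc).
  assert (RU : rad U = lval r s ly) by (rewrite <- LU; apply LR1; auto).
  assert (tangent U Q /\ cross P1 U Q > 0) as [TUQ CUQ].
  { pose proof (ring_next P P1 L1 j Hpk Hcomp PP1 Hc1' Hj) as h. fold n1 U in h.
    rewrite Hjk, HkQ in h. exact h. }
  destruct (mem1 P P1 L1 U Hc1' (nth_In _ _ Hj)) as [PU TU].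
  destruct HQ as (L2 & w2 & Hc2 & F2 & E2).
  destruct (comb w w2 Hw E2) as [_ Hc23''].
  destruct (Hc23'' lx ly Hpair) as [_ Hch3'].
  pose proof (Forall2_length F2) as Hlen2.
  set (n2 := length L2) in *.
  assert (HYL2 : In Y L2) by (apply (mem2 P Q L2); auto).
  destruct (In_nth L2 Y default_disc HYL2) as (m & Hm & HmY).
  assert (Hm1 : (nx n2 m < n2)%nat) by (apply nx_lt; lia).
  assert (Hm2 : (nx n2 (nx n2 m) < n2)%nat) by (apply nx_lt; lia).
  assert (Hm3 : (nx n2 (nx n2 (nx n2 m)) < n2)%nat) by (apply nx_lt; lia).
  assert (T1 : nth (nx n2 m) L2 default_disc = D0).
  { apply (ring_succ P Q L2 m D0 Hpk Hcomp PQ Hc2 Hm HD0 (Hsym _ _ TQ)).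
    - rewrite HmY. pose proof (cross_cyc D0 Q Y); lra.
    - rewrite HmY. intros hne. change (length L2) with n2 in hne |- *. set (E := nth (nx n2 m) L2 default_disc) in *.
      destruct (mem1 P Q L2 E Hc2 (nth_In _ _ Hm1)) as [PE TE].
      destruct (classic (E = Y)) as [eY|hne'].
      { rewrite eY. intros [h1 _]. assert (cross Q Y Y = 0) by (unfold cross; ring). lra. }
      destruct (nocusp Q D0 Y E (Hpos Q PQ) ltac:(lra) (Hpos Y PY)
        ltac:(rewrite RQ; apply Hge; auto) (Hsym _ _ TQ) TQY TY TE
        (Hov E Y PE PY hne')) as [_ N].
      intros [h1 h2]; apply N; repeat split; auto. pose proof (cross_cyc D0 Q Y); lra. }
  assert (T2 : nth (nx n2 (nx n2 m)) L2 default_disc = P1).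
  { apply (ring_succ P Q L2 (nx n2 m) P1 Hpk Hcomp PQ Hc2 Hm1 PP1 (Hsym _ _ TP1Q)).
    - rewrite T1. pose proof (cross_cyc D0 P1 Q); pose proof (cross_cyc P1 Q D0); lra.
    - rewrite T1. intros hne. change (length L2) with n2 in hne |- *. set (E := nth (nx n2 (nx n2 m)) L2 default_disc) in *.
      destruct (mem1 P Q L2 E Hc2 (nth_In _ _ Hm2)) as [PE TE].
      destruct (nocusp Q D0 P1 E (Hpos Q PQ) ltac:(lra) (Hpos P1 PP1)
        ltac:(rewrite RQ; apply Hge; auto) (Hsym _ _ TQ) (Hsym _ _ TP1Q) TP1 TE
        (Hov E P1 PE PP1 hne)) as [N _].
      intros [h1 h2]; apply N; repeat split; auto.
      pose proof (cross_cyc D0 P1 Q); pose proof (cross_cyc P1 Q D0); lra. }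
  pose proof (dec3 lx ly w2 Hch3') as D3. rewrite <- Hlen2 in D3. fold n2 in D3.
  assert (LR2 : forall t, (t < n2)%nat -> rad (nth t L2 default_disc) = lval r s (nl w2 t))
    by (intros t ht; apply (Forall2_nth' _ _ _ _ _ F2); auto).
  assert (Lm0 : nl w2 m = ly) by (apply (lval_inj r s); auto; rewrite <- LR2, HmY; auto).
  assert (Lm1 : nl w2 (nx n2 m) = Ls) by (apply (lval_s r s); auto; rewrite <- LR2, T1; auto).
  assert (Lm2 : nl w2 (nx n2 (nx n2 m)) = Ls) by (apply (lval_s r s); auto; rewrite <- LR2, T2; auto).
  set (V := nth (nx n2 (nx n2 (nx n2 m))) L2 default_disc).
  assert (RV : rad V = lval r s lx) by (rewrite <- (D3 m Hm Lm0 Lm1 Lm2); apply LR2; auto).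
  assert (tangent P1 V /\ cross Q P1 V > 0) as [TP1V CP1V].
  { pose proof (ring_next P Q L2 (nx n2 (nx n2 m)) Hpk Hcomp PQ Hc2 Hm2) as h. fold n2 V in h.
    rewrite T2 in h. exact h. }
  destruct (mem1 P Q L2 V Hc2 (nth_In _ _ Hm3)) as [PV TV].
  destruct Hpair as [[Ex Ey]|[Ex Ey]]; rewrite ?Ex, ?Ey in *; simpl in RU, RV.
  - assert (CUV : cross P1 U V > 0).
    { apply (G2 P1 Q U V (Hpos P1 PP1) (Hpos Q PQ) (Hpos U PU) (Hpos V PV) TP1Q TU TP1V TUQ
        (Hsym _ _ TV) CUQ); [|lra].
      pose proof (cross_cyc P1 V Q); pose proof (cross_cyc V Q P1); lra. }
    pose proof (ring_cond P P1 L1 j V Hc1' Hj ltac:(apply (mem2 P P1 L1); auto)) as RC.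
    fold n1 U in RC. rewrite Hjk, HkQ in RC.
    apply (sb_pos _ _ _ _ CUQ) in RC. apply RC; split; auto.
    pose proof (cross_cyc P1 V Q); pose proof (cross_cyc V Q P1); lra.
  - assert (CUV : cross Q U V > 0).
    { apply (G2' Q P1 U V (Hpos Q PQ) (Hpos P1 PP1) (Hpos U PU) (Hpos V PV) (Hsym _ _ TP1Q)
        (Hsym _ _ TUQ) TV (Hsym _ _ TU) (Hsym _ _ TP1V)); [|exact CP1V|lra].
      pose proof (cross_cyc P1 U Q); pose proof (cross_cyc U Q P1); lra. }
    pose proof (ring_cond P Q L2 (nx n2 (nx n2 m)) U Hc2 Hm2 ltac:(apply (mem2 P Q L2); auto; apply Hsym; auto)) as RC.
    fold n2 V in RC. rewrite T2 in RC.
    apply (sb_pos _ _ _ _ CP1V) in RC. apply RC; split; auto.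
    pose proof (cross_cyc P1 U Q); pose proof (cross_cyc U Q P1); lra.
Qed.
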